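(* Let $\mathcal{A}$ be a Boolean algebra, let $(Z_n)_{n\in\omega}$ be a proper $\mathcal{R}$-filtration of $\mathcal{A}$, and let $f:\mathcal{A}\to\omega$ be given by $f(x) = \min\{n : x \in Z_n\}$. Then there exists a sequence $(a_n)_{n\in\omega}$ in $\mathcal{A}$ such that $a_n \wedge a_m = 0$ whenever $m \neq n$ and $f(a_0) < f(a_1) < f(a_2) < \cdots$.
   Context: For a subset $Z$ of a Boolean algebra, $\mathcal{R}(Z) = Z \cup \{0,1\} \cup \{x^c : x \in Z\} \cup \{x\vee y : x,y\in Z\} \cup \{x\wedge y : x,y \in Z\} \cup \{x \wedge y^c : x,y\in Z\}$. A proper $\mathcal{R}$-filtration of a Boolean algebra $\mathcal{A}$ is a sequence $(Z_n)_{n\in\omega}$ of subsets with $Z_n \subsetneq Z_{n+1}$, $\mathcal{R}(Z_n)\subseteq Z_{n+1}$, and $\bigcup_n Z_n = \mathcal{A}$. *)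

(* Defs.v *)
(* a Boolean algebra is a complemented distributive lattice
   with top and bottom, i.e. a [ctbDistrLatticeType]. *)
From mathcomp Require Import all_boot all_order.
Set Implicit Arguments. Unset Strict Implicit. Unset Printing Implicit Defensive.
Import Order.TTheory.
Local Open Scope order_scope.

Section BA.
Context {disp : Order.disp_t} {A : ctbDistrLatticeType disp}.

Definition Rclos (Z : A -> Prop) (z : A) : Prop :=
  Z z \/ z = \bot \/ z = \top \/
  (exists x, Z x /\ z = ~` x) \/
  (exists x y, Z x /\ Z y /\ z = x `|` y) \/
  (exists x y, Z x /\ Z y /\ z = x `&` y) \/
  (exists x y, Z x /\ Z y /\ z = x `&` ~` y).

Definition proper_R_filtration (Z : nat -> A -> Prop) : Prop :=
  (forall n, (forall x, Z n x -> Z n.+1 x) /\ (exists x, Z n.+1 x /\ ~ Z n x)) /\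
  (forall n x, Rclos (Z n) x -> Z n.+1 x) /\
  (forall x : A, exists n, Z n x).

Definition is_min_level (Z : nat -> A -> Prop) (x : A) (n : nat) : Prop :=
  Z n x /\ (forall m, Z m x -> (n <= m)%N).
End BA.

(* Main.v *)
Require Import Defs.
From mathcomp Require Import all_boot all_order.
From Stdlib Require Import Classical ClassicalEpsilon.
Local Open Scope order_scope.
Import Order.Theory.

Section Aux.
Context (disp : Order.disp_t) (A : ctbDistrLatticeType disp)
  (Z : nat -> A -> Prop) (hZ : proper_R_filtration Z)
  (f : A -> nat) (hf : forall x : A, is_min_level Z x (f x)).

Lemma Zmono n m x : (n <= m)%N -> Z n x -> Z m x.
Proof.
move=> /subnK <-; elim: (m - n)%N => [|k IH] //= Hx.
by rewrite addSn; apply: (proj1 (proj1 hZ _ )); apply: IH.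
Qed.

Lemma fZ x n : Z n x -> (f x <= n)%N.
Proof. by move=> H; apply: (proj2 (hf x)). Qed.

Lemma Zf x : Z (f x) x. Proof. exact: (proj1 (hf x)). Qed.

Lemma f_diff x y : (f (x `&` ~` y) <= (maxn (f x) (f y)).+1)%N.
Proof.
apply: fZ; apply: (proj1 (proj2 hZ)); do 6 right; exists x, y; split; last split => //.
  by apply: Zmono (Zf x); apply: leq_maxl.
by apply: Zmono (Zf y); apply: leq_maxr.
Qed.

Lemma f_join x y : (f (x `|` y) <= (maxn (f x) (f y)).+1)%N.
Proof.
apply: fZ; apply: (proj1 (proj2 hZ)); do 4 right; left; exists x, y; split; last split => //.
  by apply: Zmono (Zf x); apply: leq_maxl.
by apply: Zmono (Zf y); apply: leq_maxr.
Qed.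

Definition unb (b : A) := forall T, exists y, y <= b /\ (T < f y)%N.

Lemma unb_top : unb \top.
Proof.
move=> T; have [x [H1 H2]] := proj2 (proj1 hZ T).
exists x; split; first exact: lex1.
rewrite ltnNge; apply/negP => Hle; apply: H2; exact: Zmono Hle (Zf x).
Qed.

Lemma unb_mono x y : x <= y -> unb x -> unb y.
Proof.
move=> Hxy H T; have [z [Hz Hf]] := H T; exists z; split => //; exact: le_trans Hxy.
Qed.

Lemma bounded_join a c M1 M2 :
  (forall y, y <= a -> (f y <= M1)%N) -> (forall y, y <= c -> (f y <= M2)%N) ->
  forall y, y <= a `|` c -> (f y <= (maxn M1 M2).+1)%N.
Proof.
move=> H1 H2 y Hy.
have -> : y = (y `&` a) `|` (y `&` ~` a).
  by rewrite -meetUr joinxC meetx1.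
apply: leq_trans (f_join _ _) _; rewrite ltnS geq_max; apply/andP; split.
  by apply: leq_trans (leq_maxl _ _); apply: H1; apply: leIr.
apply: leq_trans (leq_maxr _ _); apply: H2.
have : y `&` ~` a <= (a `|` c) `&` ~` a by apply: leI2.
by rewrite meetUl meetxC join0x => /le_trans; apply; apply: leIl.
Qed.

Lemma not_unb x : ~ unb x -> exists M, forall y, y <= x -> (f y <= M)%N.
Proof.
move=> H; apply: NNPP => H2; apply: H => T; apply: NNPP => H3.
apply: H2; exists T => y Hy; rewrite leqNgt; apply/negP => Hl; apply: H3; by exists y.
Qed.

Lemma step b T : unb b -> exists a, a <= b /\ (T < f a)%N /\ unb (b `&` ~` a).
Proof.
move=> Hb; have [a0 [Ha0 Hfa0]] := Hb (maxn (f b) T).+1.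
set c := b `&` ~` a0.
have Hbc : b `&` ~` c = a0.
  rewrite /c complI complK meetUr meetxC join0x; apply/eqP; rewrite eq_le leIr lexI Ha0 /=; by [].
case: (classic (unb c)) => Hc.
  exists a0; split => //; split => //; apply: leq_trans Hfa0; apply: leq_trans (leq_maxr (f b) T) _; by [].
case: (classic (unb a0)) => Ha.
  exists c; split; first exact: leIl.
  split; last by rewrite Hbc.
  have := f_diff b c; rewrite Hbc => Hd.
  rewrite ltnNge; apply/negP => HcT.
  have : (maxn (f b) (f c) <= maxn (f b) T)%N.
    by rewrite geq_max leq_maxl /=; apply: leq_trans HcT (leq_maxr _ _).
  move=> Hm; have := leq_trans Hfa0 Hd; rewrite ltnS => H3.
  by have := leq_trans H3 Hm; rewrite ltnn.
exfalso.
have [M1 HM1] := not_unb _ Ha; have [M2 HM2] := not_unb _ Hc.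
have Hb' : b = a0 `|` c.
  by rewrite /c joinIr joinxC meetx1 join_r.
have := bounded_join _ _ _ _ HM1 HM2; rewrite -Hb' => HB.
have [y [Hy Hfy]] := Hb (maxn M1 M2).+1.
by have := HB y Hy; rewrite leqNgt Hfy.
Qed.

End Aux.

Theorem lemma3p7 (disp : Order.disp_t) (A : ctbDistrLatticeType disp)
  (Z : nat -> A -> Prop) (hZ : proper_R_filtration Z)
  (f : A -> nat) (hf : forall x : A, is_min_level Z x (f x)) :
  exists a : nat -> A,
    (forall m n : nat, m <> n -> a n `&` a m = \bot) /\
    (forall n : nat, (f (a n) < f (a n.+1))%N).
Proof.
have Hs : forall b T, {a : A | @unb _ A f b -> a <= b /\ (T < f a)%N /\ @unb _ A f (b `&` ~` a)}.
  move=> b T; apply: constructive_indefinite_description.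
  case: (classic (@unb _ A f b)) => H.
    have [a Ha] := @step _ _ Z hZ f hf b T H; by exists a.
  by exists \bot.
pose g b T := sval (Hs b T).
have Hg b T : @unb _ A f b -> g b T <= b /\ (T < f (g b T))%N /\ @unb _ A f (b `&` ~` g b T).
  exact: (svalP (Hs b T)).
pose s := fix s n := match n with
  | 0 => (\top, g \top 0)
  | k.+1 => let b' := (s k).1 `&` ~` (s k).2 in (b', g b' (f (s k).2)) end.
have Hsg : forall n, exists T, (s n).2 = g (s n).1 T.
  by case => [|n]; [exists 0 | exists (f (s n).2)].
have Hu : forall n, @unb _ A f (s n).1.
  elim => [|n IH]; first exact: (@unb_top _ _ Z hZ f hf).
  have [T HT] := Hsg n; rewrite [in X in unb _ _ _ X]/= HT.
  exact: (proj2 (proj2 (Hg _ T IH))).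
have Hle : forall n, (s n).2 <= (s n).1.
  by move=> n; have [T ->] := Hsg n; exact: (proj1 (Hg _ _ (Hu n))).
have Hdec : forall n k, (s (n + k)).1 <= (s n).1.
  move=> n; elim => [|k IH]; first by rewrite addn0.
  by rewrite addnS /=; apply: le_trans IH; apply: leIl.
have Hdisj : forall n m, (n < m)%N -> (s m).2 `&` (s n).2 = \bot.
  move=> n m Hnm; have := Hdec n.+1 (m - n.+1)%N; rewrite subnKC // /= => H.
  apply/eqP; rewrite eq_le le0x andbT.
  have : (s m).2 <= ~` (s n).2.
    apply: le_trans (Hle m) _; apply: le_trans H _; exact: leIr.
  move=> H2; have := leI2 H2 (lexx (s n).2); by rewrite meetCx.
exists (fun n => (s n).2); split.
  move=> m n Hmn; case: (ltngtP m n) => H; first exact: Hdisj.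
    by rewrite meetC; apply: Hdisj.
  by [].
move=> n /=; exact: (proj1 (proj2 (Hg _ _ (Hu n.+1)))).
Qed.
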